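(* If $\mathcal C\subseteq2^{[n]}$ is a stable hyperplane code, then $\mathcal C$ can be realized by a stable pair $(\mathcal H,\mathcal P)$, i.e. $\mathcal C=\mathrm{code}(\mathcal H,\mathcal P)$, where $\mathcal P=\bigcap_{j\in[m]}B_j^+$ is an open polytope, given as the intersection of open half-spaces bounded by hyperplanes $\mathcal B=\{B_1,\dots,B_m\}$, such that the arrangement $\mathcal H\cup\mathcal B$ has generic intersections in $\mathbb R^d$.
   Context: An oriented affine hyperplane is $H=\{x\in\mathbb R^d:w\cdot x-h=0\}$ with $w\neq0$, and $H^+=\{w\cdot x-h>0\}$. For $\mathcal H=\{H_1,\dots,H_n\}$ and open convex $X$, $\mathrm{code}(\mathcal H,X)$ is the set of $\sigma\subseteq[n]$ with $\bigl(\bigcap_{i\in\sigma}(H_i^+\cap X)\bigr)\setminus\bigcup_{j\notin\sigma}H_j^+\ne\emptyset$ (for $\sigma=\emptyset$: $X\setminus\bigcup_iH_i^+\ne\emptyset$). $(\mathcal H,X)$ is stable if $X$ is open convex and for every $\sigma\subseteq[n]$ with $X\cap\bigcap_{i\in\sigma}H_i\neq\emptyset$, $\dim\bigcap_{i\in\sigma}H_i=d-|\sigma|$; a stable hyperplane code is the code of a stable pair. A finite set of hyperplanes $\mathcal A$ has generic intersections in $\mathbb R^d$ if every subfamily with nonempty intersection has intersection of dimension $d$ minus the size of the subfamily. *)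

(* Defs.v *)
From HB Require Import structures.
From mathcomp Require Import all_boot all_order all_algebra.
From mathcomp Require Import all_classical all_reals all_analysis.
Set Implicit Arguments. Unset Strict Implicit. Unset Printing Implicit Defensive.
Import Order.TTheory GRing.Theory Num.Theory numFieldNormedType.Exports.
Local Open Scope ring_scope.
Local Open Scope classical_set_scope.

Section Defs.
Variables (R : realType) (d : nat).

Definition dotv (u v : 'rV[R]_d) : R := \sum_(i < d) u 0 i * v 0 i.

Record hyp := Hyp { hw : 'rV[R]_d; hh : R; hw_neq0 : hw != 0 }.

Definition hplane (H : hyp) : set 'rV[R]_d := [set x | dotv (hw H) x - hh H = 0].
Definition hpos (H : hyp) : set 'rV[R]_d := [set x | dotv (hw H) x - hh H > 0].

Definition convex_set_rV (X : set 'rV[R]_d) : Prop :=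
  forall x y t, X x -> X y -> 0 <= t <= 1 -> X ((1 - t) *: x + t *: y).

Definition aff_indep (k : nat) (p : 'I_k.+1 -> 'rV[R]_d) : Prop :=
  \rank (\matrix_(i < k) (p (lift ord0 i) - p ord0)) = k.
Definition has_affdim (S : set 'rV[R]_d) (k : nat) : Prop :=
  (exists p : 'I_k.+1 -> 'rV[R]_d, (forall i, S (p i)) /\ aff_indep p) /\
  (forall k', (k < k')%N ->
     ~ exists p : 'I_k'.+1 -> 'rV[R]_d, (forall i, S (p i)) /\ aff_indep p).

Definition hcap (N : nat) (H : 'I_N -> hyp) (s : {set 'I_N}) : set 'rV[R]_d :=
  [set x | forall i, i \in s -> hplane (H i) x].

Definition hcode (n : nat) (H : 'I_n -> hyp) (X : set 'rV[R]_d) : {set {set 'I_n}} :=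
  [set s : {set 'I_n} | `[< exists x, X x /\
        (forall i, i \in s -> hpos (H i) x) /\
        (forall j, j \notin s -> ~ hpos (H j) x) >]].

Definition dim_cond (N : nat) (H : 'I_N -> hyp) (Y : set 'rV[R]_d) : Prop :=
  forall s : {set 'I_N}, (Y `&` hcap H s !=set0) ->
    (#|s| <= d)%N /\ has_affdim (hcap H s) (d - #|s|).

Definition stable_pair (n : nat) (H : 'I_n -> hyp) (X : set 'rV[R]_d) : Prop :=
  open X /\ convex_set_rV X /\ dim_cond H X.

Definition generic_intersections (N : nat) (A : 'I_N -> hyp) : Prop :=
  dim_cond A setT.

Definition open_polytope (m : nat) (B : 'I_m -> hyp) : set 'rV[R]_d :=
  [set x | forall j, hpos (B j) x].

Definition hcat (n m : nat) (H : 'I_n -> hyp) (B : 'I_m -> hyp) : 'I_(n + m) -> hyp :=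
  fun k => match fintype.split k with inl i => H i | inr j => B j end.
End Defs.

Definition stable_hyperplane_code (R : realType) (n : nat) (C : {set {set 'I_n}}) : Prop :=
  exists (d : nat) (H : 'I_n -> hyp R d) (X : set 'rV[R]_d),
    stable_pair H X /\ C = hcode H X.

(* Main.v *)
Require Import Defs.
From HB Require Import structures.
From mathcomp Require Import all_boot all_order all_algebra.
From mathcomp Require Import all_classical all_reals all_analysis.
From mathcomp Require Import ring lra.

Module Helpers.
Set Implicit Arguments. Unset Strict Implicit. Unset Printing Implicit Defensive.
Import Order.TTheory GRing.Theory Num.Theory numFieldNormedType.Exports.
Local Open Scope ring_scope.
Local Open Scope classical_set_scope.

Section LinAlg.
Variables (R : realType) (D : nat).

Lemma dotv_mx (u x : 'rV[R]_D) : dotv u x = (x *m u^T) 0 0.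
Proof. rewrite /dotv !mxE; apply: eq_bigr => i _; by rewrite mxE mulrC. Qed.

Lemma dotvD (u x y : 'rV[R]_D) : dotv u (x + y) = dotv u x + dotv u y.
Proof. by rewrite !dotv_mx mulmxDl mxE. Qed.

Lemma dotvN (u x : 'rV[R]_D) : dotv u (- x) = - dotv u x.
Proof. by rewrite !dotv_mx mulNmx mxE. Qed.

Lemma dotvB (u x y : 'rV[R]_D) : dotv u (x - y) = dotv u x - dotv u y.
Proof. by rewrite dotvD dotvN. Qed.

Lemma dotvZ (u x : 'rV[R]_D) a : dotv u (a *: x) = a * dotv u x.
Proof. by rewrite !dotv_mx -scalemxAl mxE. Qed.

Lemma dotv_sum (u : 'rV[R]_D) K (f : 'I_K -> 'rV[R]_D) :
  dotv u (\sum_k f k) = \sum_k dotv u (f k).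
Proof.
elim/big_rec2: _ => [|k y1 y2 _ <-]; first by rewrite /dotv big1 // => i _; rewrite mxE mulr0.
by rewrite dotvD.
Qed.

Variable N : nat.
Implicit Types (a : 'I_N -> 'rV[R]_D) (c : 'I_N -> R) (s : {set 'I_N}).

Definition Wm a s : 'M[R]_(#|s|, D) := \matrix_(k, j) a (enum_val k) 0 j.

Lemma WmE a s (x : 'rV[R]_D) k : (x *m (Wm a s)^T) 0 k = dotv (a (enum_val k)) x.
Proof. rewrite /dotv mxE; apply: eq_bigr => j _; by rewrite !mxE mulrC. Qed.

Definition sol a c s (x : 'rV[R]_D) := forall i, i \in s -> dotv (a i) x = c i.

Lemma sol_enum a c s x : sol a c s x <-> forall k : 'I_#|s|, dotv (a (enum_val k)) x = c (enum_val k).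
Proof.
split=> [h k|h i si]; first by apply: h; exact: enum_valP.
by have := h (enum_rank_in si i); rewrite enum_rankK_in.
Qed.

Lemma sol_ker a c s x y : sol a c s x -> sol a c s y ->
  ((y - x) *m (Wm a s)^T = 0).
Proof.
move=> hx hy; apply/rowP => k; rewrite [RHS]mxE WmE dotvB.
by move/sol_enum: hx => ->; move/sol_enum: hy => ->; rewrite subrr.
Qed.


Definition Km a s := kermx (Wm a s)^T.

Lemma rank_Km a s : \rank (Km a s) = (D - \rank (Wm a s))%N.
Proof. by rewrite /Km mxrank_ker mxrank_tr. Qed.

Lemma sol_add0 a c s x v : sol a c s x -> v *m (Wm a s)^T = 0 -> sol a c s (x + v).
Proof.
move=> /sol_enum hx hv; apply/sol_enum => k; rewrite dotvD hx.
by move/rowP: hv => /(_ k); rewrite WmE mxE => ->; rewrite addr0.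
Qed.

Lemma P1 a c s x0 : sol a c s x0 ->
  exists p : 'I_(\rank (Km a s)).+1 -> 'rV[R]_D, (forall i, sol a c s (p i)) /\ aff_indep p.
Proof.
move=> hx0.
pose B := row_base (Km a s).
pose p (i : 'I_(\rank (Km a s)).+1) := x0 + (if unlift ord0 i is Some j then row j B else 0).
exists p; split.
  move=> i; apply: sol_add0 => //; rewrite /p; case: (unlift ord0 i) => [j|]; last by rewrite mul0mx.
  apply/sub_kermxP; apply: submx_trans (row_sub j B) _.
  by rewrite /B eq_row_base.
rewrite /aff_indep.
have -> : (\matrix_(i < \rank (Km a s)) (p (lift ord0 i) - p ord0)) = B.
  apply/matrixP => i j; rewrite mxE /p liftK unlift_none addr0 (addrC x0) addrK.
  by rewrite mxE.
by rewrite /B eq_row_base.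
Qed.

Lemma P2 a c s k (p : 'I_k.+1 -> 'rV[R]_D) : (forall i, sol a c s (p i)) -> aff_indep p ->
  (k <= \rank (Km a s))%N.
Proof.
move=> hp; rewrite /aff_indep => <-; apply: mxrankS; apply/sub_kermxP.
apply/row_matrixP => i; rewrite row_mul rowK row0.
exact: sol_ker.
Qed.

End LinAlg.

Section HypLin.
Variables (R : realType) (D N : nat).
Implicit Types (A : 'I_N -> hyp R D) (s : {set 'I_N}).

Definition na A := fun i => hw (A i).
Definition ca A := fun i => hh (A i).
Definition goodr A s := \rank (Wm (na A) s) = #|s|.

Lemma hcap_sol A s x : hcap A s x <-> sol (na A) (ca A) s x.
Proof.
split=> h i si; have := h i si; rewrite /hplane /=.
  by move/eqP; rewrite subr_eq0 => /eqP.
by move=> ->; rewrite subrr.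
Qed.

Lemma good_dim_cond A (Y : set 'rV[R]_D) :
  (forall s, Y `&` hcap A s !=set0 -> goodr A s) -> dim_cond A Y.
Proof.
move=> hg s hs; have g := hg s hs; case: hs => x0 [_ /hcap_sol hx0].
split; first by rewrite -g rank_leq_col.
rewrite /goodr in g; rewrite -g -rank_Km; split.
  have [p [hp ip]] := P1 hx0; exists p; split => // i; exact/hcap_sol.
move=> k' lt [p [hp ip]].
have := P2 (fun i => proj1 (hcap_sol A s (p i)) (hp i)) ip.
by rewrite leqNgt lt.
Qed.

Lemma dim_cond_good A (Y : set 'rV[R]_D) s :
  dim_cond A Y -> Y `&` hcap A s !=set0 -> goodr A s.
Proof.
move=> dc hs; have [hle [_ hno]] := dc s hs.
case: hs => x0 [_ /hcap_sol hx0].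
apply/eqP; rewrite eqn_leq rank_leq_row /= leqNgt; apply/negP => lt.
apply: (hno (\rank (Km (na A) s))).
  rewrite rank_Km; apply: ltn_sub2l => //; exact: leq_trans lt hle.
have [p [hp ip]] := P1 hx0; exists p; split => // i; exact/hcap_sol.
Qed.

End HypLin.

Section Generic.
Variables (R : realType) (N : nat).

Lemma sum_bound (I : finType) (z d : I -> R) r :
  (forall i, `|d i| <= r) -> `|\sum_i z i * d i| <= r * \sum_i `|z i|.
Proof.
move=> hd; apply: le_trans (ler_norm_sum _ _ _) _; rewrite mulr_sumr.
apply: ler_sum => i _; rewrite normrM mulrC; apply: ler_wpM2r => //.
Qed.

Lemma AV (I : eqType) (P : pred I) (z : I -> 'I_N -> R) :
  (forall j, P j -> exists i, z j i != 0) ->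
  forall (l : seq I) (c0 : 'I_N -> R) e, 0 < e ->
  exists c : 'I_N -> R, exists2 rho, 0 < rho &
    forall c', (forall i, `|c' i - c i| < rho) ->
      (forall i, `|c' i - c0 i| < e) /\ forall j, j \in l -> P j -> \sum_i z j i * c' i != 0.
Proof.
move=> hz; elim=> [|j l IH] c0 e e0.
  by exists c0, e => // c' hc'; split => // j; rewrite in_nil.
have [c1 [rho1 rho10 h1]] := IH c0 e e0.
case Pj: (P j); last first.
  exists c1, rho1 => // c' hc'; have [h2 h3] := h1 c' hc'; split => // j'.
  rewrite in_cons => /orP [/eqP -> | ]; first by rewrite Pj.
  exact: h3.
have [i0 zi0] := hz j Pj.
pose f (c : 'I_N -> R) := \sum_i z j i * c i.
pose t := if f c1 == 0 then rho1 / 2 else 0.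
pose c2 := fun i => c1 i + (if i == i0 then t else 0).
have fc2 : f c2 = f c1 + z j i0 * t.
  rewrite /f /c2; under eq_bigr do rewrite mulrDr; rewrite big_split /=; congr (_ + _).
  rewrite (bigD1 i0) //= eqxx big1 ?addr0 // => i /negbTE ->; by rewrite mulr0.
have fc2n : f c2 != 0.
  rewrite fc2 /t; case: (eqVneq (f c1) 0) => [->|ne]; last by rewrite mulr0 addr0.
  by rewrite add0r mulf_neq0 // gt_eqF // divr_gt0.
have ht : `|t| <= rho1 / 2.
  by rewrite /t; case: ifP => _; rewrite ?normr0 ?ger0_norm ?divr_ge0 // ltW.
pose L := 1 + \sum_i `|z j i|.
have L0 : 0 < L by rewrite ltr_pwDl // sumr_ge0.
exists c2, (Num.min (rho1 / 2) (`|f c2| / L)).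
  by rewrite lt_min divr_gt0 //= divr_gt0 // normr_gt0.
move=> c' hc'.
have hc1 : forall i, `|c' i - c1 i| < rho1.
  move=> i; have := hc' i; rewrite lt_min => /andP [a _].
  have -> : c' i - c1 i = (c' i - c2 i) + (if i == i0 then t else 0) by rewrite /c2; ring.
  apply: le_lt_trans (ler_normD _ _) _.
  rewrite [X in _ < X](splitr rho1) ltr_leD //; case: ifP => _; rewrite ?normr0 //.
  by rewrite divr_ge0 // ltW.
have [h2 h3] := h1 c' hc1; split => // j'.
rewrite in_cons => /orP [/eqP -> _ | ]; last exact: h3.
have -> : \sum_i z j i * c' i = f c2 + \sum_i z j i * (c' i - c2 i).
  rewrite /f -big_split /=; apply: eq_bigr => i _; ring.
apply/eqP => h0.
have : `|\sum_i z j i * (c' i - c2 i)| <= (`|f c2| / L) * \sum_i `|z j i|.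
  apply: sum_bound => i; have := hc' i; rewrite lt_min => /andP [_ b]; exact: ltW.
have -> : \sum_i z j i * (c' i - c2 i) = - f c2 by apply/eqP; rewrite -addr_eq0 addrC h0.
rewrite normrN => hle.
have : `|f c2| / L * \sum_i `|z j i| < `|f c2|.
  rewrite -mulrA gtr_pMr ?normr_gt0 // ltr_pdivrMl // mulr1 /L ltrDr //.
by rewrite ltNge hle.
Qed.

End Generic.

Section Generic2.
Variables (R : realType) (D N : nat).

Lemma bad_functional (a : 'I_N -> 'rV[R]_D) s : \rank (Wm a s) != #|s| ->
  exists z : 'I_N -> R, (exists i, z i != 0) /\
    forall c x, sol a c s x -> \sum_i z i * c i = 0.
Proof.
move=> bad.
have kn : kermx (Wm a s) != 0 by rewrite kermx_eq0.
have [k yk] : exists k, row k (kermx (Wm a s)) != 0.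
  apply/existsP; apply: contraR kn => /existsPn h; apply/eqP/row_matrixP => k.
  by rewrite row0; apply/eqP; move: (h k); rewrite negbK.
set y := row k (kermx (Wm a s)) in yk.
have yW : y *m Wm a s = 0 by rewrite /y -row_mul mulmx_ker row0.
have [k0 yk0] : exists k0, y 0 k0 != 0.
  apply/existsP; apply: contraR yk => /existsPn h; apply/eqP/rowP => k0.
  by apply/eqP; rewrite [X in _ == X]mxE; move: (h k0); rewrite negbK.
have Hx0 := enum_valP k0.
exists (fun i => if i \in s then y 0 (enum_rank_in Hx0 i) else 0); split.
  by exists (enum_val k0); rewrite Hx0 enum_valK_in.
move=> c x /sol_enum hx.
rewrite (bigID (mem s)) /= [X in _ + X]big1 ?addr0; last first.
  by move=> i /negbTE ->; rewrite mul0r.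
under eq_bigr => i si do rewrite si.
rewrite (big_enum_val (fun i => y 0 (enum_rank_in Hx0 i) * c i)) /=.
under eq_bigr do rewrite enum_valK_in -hx -WmE.
have : (x *m (Wm a s)^T *m y^T) 0 0 = 0.
  by rewrite -mulmxA -trmx_mul yW trmx0 mulmx0 mxE.
move=> h0; transitivity ((x *m (Wm a s)^T *m y^T) 0 0) => //; rewrite [RHS]mxE; apply: eq_bigr => j _; rewrite mulrC; congr (_ * _); by rewrite [RHS]mxE.
Qed.

Lemma generic_offsets (a : 'I_N -> 'rV[R]_D) (c0 : 'I_N -> R) e : 0 < e ->
  exists c : 'I_N -> R, (forall i, `|c i - c0 i| < e) /\
    forall s, (exists x, sol a c s x) -> \rank (Wm a s) = #|s|.
Proof.
move=> e0.
have hz : forall s : {set 'I_N}, exists z : 'I_N -> R, \rank (Wm a s) != #|s| ->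
   (exists i, z i != 0) /\ forall c x, sol a c s x -> \sum_i z i * c i = 0.
  move=> s; case: (eqVneq (\rank (Wm a s)) #|s|) => [_|bad]; first by exists (fun=> 0).
  by have [z hz] := bad_functional bad; exists z.
have [zf hzf] := choice hz.
have [c [rho rho0 h]] := @AV R N _ (fun s => \rank (Wm a s) != #|s|) zf
   (fun s bs => proj1 (hzf s bs)) (enum {set 'I_N}) c0 e e0.
have [h1 h2] := h c (fun i => ltac:(by rewrite subrr normr0)).
exists c; split => // s [x hx]; apply/eqP; apply: contraT => bad.
have := h2 s (mem_enum _ _) bad; by rewrite (proj2 (hzf s bad) c x hx) eqxx.
Qed.

End Generic2.

Section Topo.
Variables (R : realType) (d : nat).

Lemma ballE (x y : 'rV[R]_d) e : ball x e y <-> (0 < e /\ forall j, `|x 0 j - y 0 j| < e).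
Proof.
split => [[e0 h]|[e0 h]]; first by split => // j; exact: (h 0 j).
by split => // i j; rewrite (ord1 i); exact: h.
Qed.

Lemma open_ball (X : set 'rV[R]_d) x : open X -> X x ->
  exists2 r, 0 < r & forall v : 'rV[R]_d, (forall j, `|v 0 j| < r) -> X (x + v).
Proof.
move=> Xo Xx; have := Xo x Xx => /nbhs_ballP [r r0 hr].
exists r => // v hv; apply: hr; apply/ballE; split => // j.
by rewrite mxE opprD addNKr normrN.
Qed.


Lemma fin_pos (I : finType) (P : I -> R -> Prop) :
  (forall i, exists2 e, 0 < e & forall e', 0 < e' -> e' <= e -> P i e') ->
  exists2 e, 0 < e & forall i, P i e.
Proof.
move=> h.
suff [e e0 he] : exists2 e, 0 < e & forall e', 0 < e' -> e' <= e -> forall i, i \in enum I -> P i e'.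
  by exists e => // i; apply: he => //; rewrite mem_enum.
elim: (enum I) => [|i l [e e0 he]]; first by exists 1 => // e' _ _ i; rewrite in_nil.
have [ei ei0 hei] := h i.
exists (Num.min e ei); first by rewrite lt_min e0 ei0.
move=> e' e'0 e'le j; rewrite le_min in e'le.
case/andP: e'le => le1 le2.
rewrite in_cons => /orP [/eqP -> | jl]; first exact: hei.
exact: he.
Qed.

Definition hf (H : hyp R d) (x : 'rV[R]_d) := dotv (hw H) x - hh H.

Lemma hfD (H : hyp R d) x v : hf H (x + v) = hf H x + dotv (hw H) v.
Proof. rewrite /hf dotvD; ring. Qed.

Lemma dotv_bound (w v : 'rV[R]_d) r : (forall j, `|v 0 j| <= r) ->
  `|dotv w v| <= r * \sum_j `|w 0 j|.
Proof. by move=> hv; apply: sum_bound. Qed.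

Lemma open_hpos (H : hyp R d) : open (hpos H).
Proof.
rewrite openE => x hx; rewrite /interior; apply/nbhs_ballP.
have fx0 : 0 < hf H x by [].
pose L := 1 + \sum_j `|hw H 0 j|.
have L0 : 0 < L by rewrite ltr_pwDl // sumr_ge0.
exists (hf H x / L); first by apply: divr_gt0.
move=> y /ballE [_ hy].
have -> : y = x + (y - x) by rewrite addrC subrK.
rewrite /hpos /= -/(hf H _) hfD.
have hb := @dotv_bound (hw H) (y - x) (hf H x / L) (fun j => ltac:(by rewrite !mxE distrC; apply: ltW; exact: hy)).
have : hf H x / L * \sum_j `|hw H 0 j| < hf H x.
  rewrite -mulrA gtr_pMr // ltr_pdivrMl // mulr1 /L ltrDr //.
move: hb; rewrite ler_norml => /andP [hb _] hlt.
lra.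
Qed.

Lemma open_polytope_open m (B : 'I_m -> hyp R d) : open (open_polytope B).
Proof.
rewrite openE => x hx; rewrite /interior; apply/nbhs_ballP.
have h1 : forall j, exists2 e, 0 < e & forall e', 0 < e' -> e' <= e -> ball x e' `<=` hpos (B j).
  move=> j; have := open_hpos (H:=B j); rewrite openE => /(_ x (hx j)) /nbhs_ballP [e e0 he].
  exists e => // e' e'0 le y hy; apply: he; exact: le_ball hy.
have [e e0 he] := fin_pos h1.
by exists e => // y hy j; apply: he.
Qed.

Lemma convex_polytope m (B : 'I_m -> hyp R d) : convex_set_rV (open_polytope B).
Proof.
move=> x y t hx hy /andP [t0 t1] j; have := hx j; have := hy j.
rewrite /hpos /= dotvD !dotvZ => h1 h2.
have -> : (1 - t) * dotv (hw (B j)) x + t * dotv (hw (B j)) y - hh (B j) =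
   (1 - t) * (dotv (hw (B j)) x - hh (B j)) + t * (dotv (hw (B j)) y - hh (B j)) by ring.
case: (eqVneq t 0) => [->|tn0]; first by rewrite subr0 mul1r mul0r addr0.
have tp : 0 < t by rewrite lt_def tn0 t0.
apply: ltr_wpDl; first by apply: mulr_ge0; [rewrite subr_ge0 | apply: ltW].
exact: mulr_gt0.
Qed.


Lemma hf_comb (H : hyp R d) K (mu : 'I_K -> R) (p : 'I_K -> 'rV[R]_d) :
  \sum_k mu k = 1 -> hf H (\sum_k mu k *: p k) = \sum_k mu k * hf H (p k).
Proof.
move=> s1; rewrite /hf dotv_sum.
under [in RHS]eq_bigr do rewrite mulrBr.
rewrite sumrB -mulr_suml s1 mul1r; congr (_ - _); apply: eq_bigr => k _; exact: dotvZ.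
Qed.

Lemma conv_comb (X : set 'rV[R]_d) : convex_set_rV X -> forall K (mu : 'I_K -> R) (p : 'I_K -> 'rV[R]_d),
  (forall k, 0 <= mu k) -> \sum_k mu k = 1 -> (forall k, X (p k)) -> X (\sum_k mu k *: p k).
Proof.
move=> cX; elim=> [|K IH] mu p mu0 s1 pX.
  by move: s1; rewrite big_ord0 => /eqP; rewrite eq_sym oner_eq0.
rewrite big_ord_recr /=; move: s1; rewrite big_ord_recr /= => s1.
set t := mu ord_max in s1 *.
set S := \sum_(i < K) mu (widen_ord (leqnSn K) i) in s1.
have S0 : 0 <= S by apply: sumr_ge0 => i _.
have t0 : 0 <= t by exact: mu0.
case: (eqVneq S 0) => [Sz|Sn0].
  have hz : forall i : 'I_K, mu (widen_ord (leqnSn K) i) = 0.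
    by move=> i; apply/eqP; move/eqP: Sz; rewrite psumr_eq0 // => /allP /(_ i (mem_index_enum _)).
  rewrite big1 ?add0r; last by move=> i _; rewrite hz scale0r.
  have -> : t = 1 by rewrite -s1 Sz add0r.
  by rewrite scale1r.
have Sp : 0 < S by rewrite lt_def Sn0 S0.
pose mu' := fun i : 'I_K => mu (widen_ord (leqnSn K) i) / S.
have hy := IH mu' (fun i => p (widen_ord (leqnSn K) i)) (fun i => divr_ge0 (mu0 _) S0)
  (ltac:(by rewrite -mulr_suml divff)) (fun i => pX _).
have -> : \sum_(i < K) mu (widen_ord (leqnSn K) i) *: p (widen_ord (leqnSn K) i) =
   (1 - t) *: \sum_(i < K) mu' i *: p (widen_ord (leqnSn K) i).
  have -> : 1 - t = S by rewrite -s1; ring.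
  rewrite scaler_sumr; apply: eq_bigr => i _; rewrite scalerA /mu' mulrC divfK //.
apply: cX => //; rewrite t0 /= -s1 lerDr //.
Qed.

Lemma cont_sum K (I : Type) (r : seq I) (P : pred I) (F : I -> 'rV[R]_K -> R) :
  (forall i, continuous (F i)) -> continuous (fun v => \sum_(i <- r | P i) F i v).
Proof.
move=> hF; elim: r => [|i r IH].
  by under eq_fun do rewrite big_nil; apply: cst_continuous.
under eq_fun do rewrite big_cons; case: (P i) => //.
move=> v; apply: continuousD; [exact: hF | exact: IH].
Qed.

Lemma cont_lin K (a : 'I_K -> R) : continuous (fun v : 'rV[R]_K => \sum_k v 0 k * a k).
Proof.
apply: cont_sum => k v; apply: continuousM; first exact: coord_continuous.
exact: cst_continuous.
Qed.

Lemma box_min K (f : 'rV[R]_K -> R) : continuous f ->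
  (forall v : 'rV[R]_K, (forall i, 0 <= v 0 i <= 1) -> 0 < f v) ->
  exists2 m, 0 < m & forall v : 'rV[R]_K, (forall i, 0 <= v 0 i <= 1) -> m <= f v.
Proof.
move=> cf hpos.
pose A := [set v : 'rV[R]_K | forall i, (`[0, 1]%classic : set R) (v ord0 i)].
have cA : compact A := @rV_compact R K (fun _ => (`[0, 1]%classic : set R)) (fun _ => @segment_compact R 0 1).
have A0 : A !=set0.
  by exists 0 => i /=; rewrite mxE in_itv /= lexx ler01.
have inA : forall v, A v <-> forall i, 0 <= v 0 i <= 1.
  by move=> v; split => h i; have := h i => /=; rewrite in_itv.
have [c cA' hc] := EVT_min_rV A0 cA (continuous_subspaceT cf).
have cA'' : A c by rewrite inE in cA'.
exists (f c); first by apply: hpos; apply/inA.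
by move=> v hv; apply: hc; rewrite inE; apply/inA.
Qed.

End Topo.

Section Solve.
Variables (R : realType) (D N : nat).

Definition Qm (a : 'I_N -> 'rV[R]_D) (s : {set 'I_N}) := pinvmx (Wm a s)^T.
Definition solv (a : 'I_N -> 'rV[R]_D) (s : {set 'I_N}) (g : 'I_N -> R) : 'rV[R]_D :=
  (\row_(k < #|s|) g (enum_val k)) *m Qm a s.

Lemma solvP a s g : \rank (Wm a s) = #|s| -> forall i, i \in s -> dotv (a i) (solv a s g) = g i.
Proof.
move=> hr i si.
have full : row_full (Wm a s)^T by rewrite /row_full mxrank_tr hr.
have := mulmxKpV (submx_full (\row_(k < #|s|) g (enum_val k)) full).
move/rowP => /(_ (enum_rank_in si i)); rewrite WmE mxE enum_rankK_in //.
Qed.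

Definition Lq (a : 'I_N -> 'rV[R]_D) (s : {set 'I_N}) := 1 + \sum_k \sum_j `|Qm a s k j|.

Lemma Lq_gt0 a s : 0 < Lq a s.
Proof. by rewrite ltr_pwDl // sumr_ge0 // => k _; rewrite sumr_ge0. Qed.

Lemma solv_bound a s g r : 0 <= r -> (forall i, `|g i| <= r) -> forall j, `|solv a s g 0 j| <= r * Lq a s.
Proof.
move=> r0 hg j; rewrite mxE.
have -> : \sum_k (\row_(k0 < #|s|) g (enum_val k0)) 0 k * Qm a s k j =
   \sum_k Qm a s k j * g (enum_val k) by apply: eq_bigr => k _; rewrite mxE mulrC.
apply: le_trans (sum_bound _ (fun k => hg (enum_val k))) _.
apply: ler_wpM2l => //; rewrite /Lq.
apply: le_trans (_ : \sum_k \sum_j0 `|Qm a s k j0| <= _); last by rewrite lerDr.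
apply: ler_sum => k _; rewrite (bigD1 j) //= lerDl; by apply: sumr_ge0 => i _.
Qed.

End Solve.

Section Sign.
Variable R : realType.
Lemma ge_min_l (a b : R) : Num.min a b <= a. Proof. by rewrite ge_min lexx. Qed.
Lemma ge_min_r (a b : R) : Num.min a b <= b. Proof. by rewrite ge_min lexx orbT. Qed.
Lemma sign_keep (a b e : R) : e <= `|a| -> `|b| < e -> (0 < a + b) = (0 < a).
Proof.
move=> ha; rewrite ltr_norml => /andP [b1 b2].
have [a0|a0] := leP 0 a.
  rewrite ger0_norm // in ha; apply/idP/idP => _; lra.
rewrite ltr0_norm // in ha; apply/idP/idP => h; lra.
Qed.
End Sign.

Section Main.
Variables (R : realType) (d n : nat) (H : 'I_n -> hyp R d) (X : set 'rV[R]_d).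
Hypotheses (Xo : open X) (Xc : convex_set_rV X) (Xs : dim_cond H X).

Lemma goodX s x : X x -> hcap H s x -> \rank (Wm (na H) s) = #|s|.
Proof. by move=> Xx hx; apply: (dim_cond_good Xs); exists x. Qed.

Lemma in_hcode (sg : {set 'I_n}) x : X x -> (forall i, (i \in sg) = (0 < hf (H i) x)) ->
  sg \in hcode H X.
Proof.
move=> Xx h; rewrite inE; apply/asboolP; exists x; split => //; split => i.
  by rewrite h.
by rewrite h => /negP.
Qed.

Lemma vsmall (v : 'rV[R]_d) j : `|v 0 j| <= \sum_j0 `|v 0 j0|.
Proof. by rewrite (bigD1 j) //= lerDl; apply: sumr_ge0 => i _. Qed.

Lemma atoms (sg : {set 'I_n}) : sg \in hcode H X ->
  exists x, X x /\ forall i, (i \in sg -> 0 < hf (H i) x) /\ (i \notin sg -> hf (H i) x < 0).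
Proof.
rewrite inE => /asboolP [x [Xx [h1 h2]]].
pose s : {set 'I_n} := [set j | hf (H j) x == 0]%SET.
have hs : hcap H s x by move=> i; rewrite inE => /eqP.
have gs := goodX Xx hs.
pose v0 := solv (na H) s (fun _ => -1).
have hv0 : forall i, i \in s -> dotv (hw (H i)) v0 = -1 := solvP _ gs.
have [r r0 hr] := open_ball Xo Xx.
have hfp : forall i, exists2 e, 0 < e & forall e', 0 < e' -> e' <= e ->
    (i \notin s -> e' * `|dotv (hw (H i)) v0| < `|hf (H i) x|).
  move=> i; case: (boolP (i \in s)) => si.
    by exists 1 => // e' _ _; rewrite si.
  have hx0 : 0 < `|hf (H i) x| by rewrite normr_gt0; move: si; rewrite inE.
  exists (`|hf (H i) x| / (1 + `|dotv (hw (H i)) v0|)); first by rewrite divr_gt0 // ltr_pwDl.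
  move=> e' e'0 le _; apply: le_lt_trans (ler_wpM2r (normr_ge0 _) le) _.
  rewrite mulrAC ltr_pdivrMr ?ltr_pwDl // ltr_pM2l // ltrDr //.
have [e e0 he] := fin_pos hfp.
pose V := \sum_j `|v0 0 j|.
pose th := Num.min e (r / (1 + V)) / 2.
have V0 : 0 <= V by apply: sumr_ge0 => j _.
have th0 : 0 < th by rewrite divr_gt0 // lt_min e0 divr_gt0 // ltr_pwDl.
have thle : th <= e.
  by rewrite /th ler_pdivrMr // (le_trans (ge_min_l _ _)) // ler_pMr // ler1n.
have thr : th * (1 + V) < r.
  rewrite /th mulrAC ltr_pdivrMr // (le_lt_trans (ler_wpM2r _ (ge_min_r _ _))) //.
    by rewrite addr_ge0.
  by rewrite divfK ?gt_eqF ?ltr_pwDl // ltr_pMr // ltr1n.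
exists (x + th *: v0); split.
  apply: hr => j; rewrite mxE normrM gtr0_norm //.
  apply: le_lt_trans thr; apply: ler_wpM2l; first exact: ltW.
  by apply: le_trans (vsmall v0 j) _; rewrite lerDr.
move=> i; rewrite hfD dotvZ.
have key : i \notin s -> `|th * dotv (hw (H i)) v0| < `|hf (H i) x|.
  move=> si; rewrite normrM gtr0_norm //; apply: le_lt_trans (he i si).
  by apply: ler_wpM2r.
split => hi.
  have si : i \notin s by rewrite inE; apply: lt0r_neq0; exact: h1.
  rewrite (sign_keep (e := `|hf (H i) x|)); [exact: h1 | exact: lexx | exact: key].
case: (boolP (i \in s)) => si.
  by rewrite hv0 // (eqP (_ : hf (H i) x == 0)) ?add0r ?mulrN1 ?oppr_lt0 //; move: si; rewrite inE.
have hneg : hf (H i) x < 0.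
  rewrite lt_def eq_sym; move: si; rewrite inE => -> /=; rewrite leNgt; apply/negP => p; exact: (h2 i hi p).
rewrite -oppr_gt0 opprD (sign_keep (e := `|hf (H i) x|)) ?normrN ?oppr_gt0 //; exact: key.
Qed.

Lemma cont_add K (f g : 'rV[R]_K -> R) : continuous f -> continuous g -> continuous (fun v => f v + g v).
Proof. by move=> hf hg v; apply: continuousD; [exact: hf | exact: hg]. Qed.
Lemma cont_sub K (f g : 'rV[R]_K -> R) : continuous f -> continuous g -> continuous (fun v => f v - g v).
Proof. by move=> hf hg v; apply: continuousB; [exact: hf | exact: hg]. Qed.

Lemma cont_norm K (g : 'rV[R]_K -> R) : continuous g -> continuous (fun v => `|g v|).
Proof. by move=> hg v; apply: (continuous_comp (hg v)); exact: norm_continuous. Qed.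

Lemma sub_sum_le (s : {set 'I_n}) (f : 'I_n -> R) e : (forall i, i \in s -> f i <= e) -> 0 <= e ->
  \sum_(i in s) f i <= e *+ n.
Proof.
move=> hf e0; rewrite big_mkcond /=.
apply: le_trans (_ : \sum_(i < n) e <= _); last by rewrite sumr_const card_ord.
by apply: ler_sum => i _; case: ifP => [/hf|] //.
Qed.

Lemma robust K (p : 'I_K -> 'rV[R]_d) r : 0 < r ->
  (forall k (v : 'rV[R]_d), (forall j, `|v 0 j| < r) -> X (p k + v)) ->
  exists2 del, 0 < del & forall (mu : 'I_K -> R) (u : 'I_n -> R),
    (forall k, 0 <= mu k) -> \sum_k mu k = 1 -> (forall i, `|u i| < del) ->
    [set i | 0 < hf (H i) (\sum_k mu k *: p k) + u i]%SET \in hcode H X.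
Proof.
move=> r0 hp.
have pX : forall k, X (p k).
  by move=> k; have := hp k 0 (fun j => ltac:(by rewrite mxE normr0)); rewrite addr0.
pose Mx i k := hf (H i) (p k).
pose F (s : {set 'I_n}) (v : 'rV[R]_K) :=
  \sum_(i in s) `|\sum_k v 0 k * Mx i k| + `|1 - \sum_k v 0 k * 1|.
have Fc : forall s, continuous (F s).
  move=> s; rewrite /F; apply: cont_add.
    by apply: cont_sum => i; apply: cont_norm; exact: cont_lin.
  apply: cont_norm; apply: cont_sub; first exact: cst_continuous.
  exact: cont_lin.
have F0 : forall s v, 0 <= F s v by move=> s v; rewrite addr_ge0 // sumr_ge0.
have heta : forall s, exists2 e, 0 < e & forall e', 0 < e' -> e' <= e ->
    (\rank (Wm (na H) s) != #|s| -> forall v : 'rV[R]_K, (forall k, 0 <= v 0 k <= 1) ->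
       n.+1%:R * e' <= F s v).
  move=> s; case: (eqVneq (\rank (Wm (na H) s)) #|s|) => [g|bad].
    by exists 1 => // e' _ _; rewrite g eqxx.
  have [m m0 hm] : exists2 m, 0 < m & forall v : 'rV[R]_K, (forall i, 0 <= v 0 i <= 1) -> m <= F s v.
    apply: box_min => // v hv; rewrite lt_def F0 andbT; apply/negP => /eqP.
    move/eqP; rewrite paddr_eq0 ?sumr_ge0 // => /andP [/eqP hs /eqP h1].
    move/eqP: h1; rewrite normr_eq0 subr_eq0 => /eqP h1.
    have v0 : forall k, 0 <= v 0 k by move=> k; case/andP: (hv k).
    have s1 : \sum_k v 0 k = 1 by rewrite h1; apply: eq_bigr => k _; rewrite mulr1.
    pose q := \sum_k v 0 k *: p k.
    have Xq : X q := conv_comb Xc v0 s1 pX.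
    have hq : hcap H s q.
      move=> i si; rewrite /hplane /= -/(hf (H i) q) /q hf_comb //.
      move/eqP: hs; rewrite psumr_eq0 // => /allP /(_ i (mem_index_enum _)); rewrite si /=.
      by rewrite normr_eq0 => /eqP.
    by move: bad; rewrite (goodX Xq hq) eqxx.
  exists (m / n.+1%:R); first by rewrite divr_gt0.
  move=> e' e'0 le _ v hv; apply: le_trans (hm v hv).
  by rewrite mulrC -ler_pdivlMr.
have [eta eta0 heta'] := fin_pos heta.
pose Wt := 1 + \sum_i \sum_j `|hw (H i) 0 j|.
have Wt1 : 1 <= Wt by rewrite lerDl; apply: sumr_ge0 => i _; apply: sumr_ge0.
have Wti : forall i, \sum_j `|hw (H i) 0 j| <= Wt.
  move=> i; apply: le_trans (_ : \sum_i0 \sum_j `|hw (H i0) 0 j| <= _); last by rewrite lerDr.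
  by rewrite (bigD1 i) //= lerDl; apply: sumr_ge0 => i0 _; apply: sumr_ge0.
have hdel : forall s : {set 'I_n}, exists2 e, 0 < e & forall e', 0 < e' -> e' <= e ->
    forall g : 'I_n -> R, (forall i, `|g i| <= e') ->
      (forall j, `|solv (na H) s g 0 j| < r) /\ (forall i, `|dotv (hw (H i)) (solv (na H) s g)| < eta / 2).
  move=> s; pose c := Num.min r (eta / 2).
  have c0 : 0 < c by rewrite lt_min r0 divr_gt0.
  have L0 := Lq_gt0 (na H) s.
  have LW0 : 0 < Lq (na H) s * Wt by rewrite mulr_gt0 // (lt_le_trans ltr01).
  exists (c / (2 * (Lq (na H) s * Wt))); first by rewrite divr_gt0 // mulr_gt0.
  move=> e' e'0 le g hg.
  have hb := solv_bound (na H) s (ltW e'0) hg.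
  have key : e' * (Lq (na H) s * Wt) <= c / 2.
    apply: le_trans (ler_wpM2r (ltW LW0) le) _.
    by rewrite invfM -!mulrA mulVf ?mulr1 // gt_eqF.
  have key2 : e' * Lq (na H) s <= c / 2.
    apply: le_trans key; rewrite mulrA ler_pMr ?mulr_gt0 //.
  have c2 : c / 2 < c by rewrite ltr_pdivrMr // ltr_pMr // ltr1n.
  split => [j|i].
    apply: le_lt_trans (hb j) _; apply: le_lt_trans key2 _; apply: lt_le_trans c2 _.
    exact: ge_min_l.
  apply: le_lt_trans (dotv_bound _ (fun j => hb j)) _.
  apply: (@le_lt_trans _ _ (e' * Lq (na H) s * Wt)).
    by apply: ler_wpM2l; [rewrite mulr_ge0 // ltW | exact: Wti].
  rewrite -mulrA; apply: le_lt_trans key _; apply: lt_le_trans c2 _; exact: ge_min_r.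
have [del0 del00 hdel0] := fin_pos hdel.
exists (Num.min del0 (eta / 2)); first by rewrite lt_min del00 divr_gt0.
move=> mu u mu0 s1 hu.
pose q := \sum_k mu k *: p k.
pose s : {set 'I_n} := [set i | `|hf (H i) q| < eta]%SET.
pose muv := \row_k mu k.
have box : forall k, 0 <= muv 0 k <= 1.
  move=> k; rewrite mxE mu0 /= -s1 (bigD1 k) //= lerDl; by apply: sumr_ge0 => k0 _.
have gs : \rank (Wm (na H) s) = #|s|.
  apply/eqP; apply: contraT => bad.
  have := heta' s bad muv box.
  have -> : F s muv = \sum_(i in s) `|hf (H i) q|.
    have hm : forall k, muv 0 k = mu k by move=> k; rewrite mxE.
    rewrite /F; under eq_bigr => i _ do under eq_bigr => k _ do rewrite hm.
    under [X in `|1 - X|]eq_bigr => k _ do rewrite hm mulr1.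
    rewrite s1 subrr normr0 addr0; apply: eq_bigr => i _; rewrite /q hf_comb //.
  have hle := @sub_sum_le s (fun i => `|hf (H i) q|) eta (fun i => ltac:(by rewrite inE => /ltW)) (ltW eta0).
  move=> hge; have := le_trans hge hle; rewrite mulr_natl mulrS => h.
  have : eta <= 0 by lra.
  by rewrite leNgt eta0.
have hu0 : forall i, `|u i| <= del0 by move=> i; apply: ltW; apply: lt_le_trans (hu i) _; exact: ge_min_l.
have [hv1 hv2] := hdel0 s u hu0.
pose v := solv (na H) s u.
have Xx : X (q + v).
  have -> : q + v = \sum_k mu k *: (p k + v).
    under eq_bigr do rewrite scalerDr; rewrite big_split /= -scaler_suml s1 scale1r //.
  by apply: conv_comb => // k; apply: hp.
apply: (in_hcode Xx) => i; rewrite inE hfD.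
case: (boolP (i \in s)) => si; first by rewrite /v solvP.
have hge : eta / 2 <= `|hf (H i) q|.
  move: si; rewrite inE -leNgt => h; apply: le_trans h; rewrite ler_pdivrMr // ler_pMr // ler1n //.
rewrite -/q (sign_keep (e := eta / 2)) //; last by apply: lt_le_trans (hu i) _; exact: ge_min_r.
by rewrite (sign_keep (e := eta / 2)).
Qed.

End Main.

Lemma split_lsh m n (i : 'I_m) : fintype.split (lshift n i) = inl i.
Proof. exact: (unsplitK (inl i)). Qed.
Lemma split_rsh m n (j : 'I_n) : fintype.split (rshift m j) = inr j.
Proof. exact: (unsplitK (inr j)). Qed.

Section Assemble.
Variables (R : realType) (D n m : nat).

Lemma dim_cond_mono N (A : 'I_N -> hyp R D) (Y Y' : set 'rV[R]_D) :
  Y `<=` Y' -> dim_cond A Y' -> dim_cond A Y.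
Proof. move=> sub dc s [x [Yx hx]]; apply: dc; exists x; split => //; exact: sub. Qed.

Lemma assemble (g : 'I_n -> 'rV[R]_D) (b : 'I_m -> 'rV[R]_D) (c0 : 'I_(n + m) -> R) e :
  (forall i, g i != 0) -> (forall j, b j != 0) -> 0 < e ->
  exists (H' : 'I_n -> hyp R D) (B' : 'I_m -> hyp R D),
    (forall i, hw (H' i) = g i /\ `|hh (H' i) - c0 (lshift m i)| < e) /\
    (forall j, hw (B' j) = b j /\ `|hh (B' j) - c0 (rshift n j)| < e) /\
    generic_intersections (hcat H' B') /\ dim_cond H' setT.
Proof.
move=> gn bn e0.
pose a k := match fintype.split k with inl i => g i | inr j => b j end.
have [c [hc hgen]] := generic_offsets a c0 e0.
pose H' i := Hyp (c (lshift m i)) (gn i).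
pose B' j := Hyp (c (rshift n j)) (bn j).
exists H', B'.
have naE : na (hcat H' B') = a.
  by apply: funext => k; rewrite /na /hcat /a; case: (fintype.split k).
have caE : ca (hcat H' B') = c.
  apply: funext => k; rewrite /ca /hcat; have := splitK k.
  by case: (fintype.split k) => [i|j] /= <-.
have gen : generic_intersections (hcat H' B').
  apply: good_dim_cond => s [x [_ /hcap_sol hx]]; rewrite /goodr naE; apply: hgen.
  by exists x; rewrite -naE -caE.
split; first by move=> i; split => //; exact: hc.
split; first by move=> j; split => //; exact: hc.
split => // s [x [_ hx]].
pose s' := [set lshift m i | i in s]%SET.
have hcE : hcap (hcat H' B') s' = hcap H' s.
  apply: funext => y; apply: propext; split => h.
    move=> i si; have := h (lshift m i) (imset_f _ si).
    by rewrite /hcat /= (unsplitK (inl i)).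
  move=> k /imsetP [i si ->]; rewrite /hcat (unsplitK (inl i)); exact: h.
have cE : #|s'| = #|s| by rewrite card_imset //; exact: lshift_inj.
have := gen s'; rewrite hcE cE; apply; exists x; split => //.
Qed.

End Assemble.

Lemma dotv_const1 (R : realType) (x : 'rV[R]_1) (a : R) : dotv (const_mx a) x = a * x 0 0.
Proof. by rewrite /dotv big_ord1 mxE. Qed.

Lemma empty_case (R : realType) n : exists D m (H' : 'I_n -> hyp R D) (B' : 'I_m -> hyp R D),
  stable_pair H' (open_polytope B') /\ (forall sg, sg \notin hcode H' (open_polytope B')) /\ generic_intersections (hcat H' B').
Proof.
have n1 : (const_mx 1 : 'rV[R]_1) != 0 by apply/negP => /eqP/rowP/(_ 0); rewrite !mxE; apply/eqP; exact: oner_neq0.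
have nm1 : (const_mx (-1) : 'rV[R]_1) != 0.
  by apply/negP => /eqP/rowP/(_ 0); rewrite !mxE; apply/eqP; rewrite oppr_eq0; exact: oner_neq0.
pose b (j : 'I_2) : 'rV[R]_1 := if j == ord0 then const_mx 1 else const_mx (-1).
have bn : forall j, b j != 0 by move=> j; rewrite /b; case: ifP.
pose c0 (k : 'I_(n + 2)) : R := match fintype.split k with inl _ => 0 | inr _ => 1 end.
have [H' [B' [hH [hB [gen dc]]]]] := @assemble R 1 n 2 (fun=> const_mx 1) b c0 (1/2) (fun=> n1) bn
  ltac:(by rewrite divr_gt0).
have Pe : forall x, ~ open_polytope B' x.
  move=> x Px; have h0 := Px ord0; have h1 := Px ord_max.
  have [e0 c0'] := hB ord0; have [e1 c1'] := hB ord_max.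
  move: h0 h1 c0' c1'; rewrite /hpos /= e0 e1 /b /= !dotv_const1 /c0 !split_rsh.
  rewrite !ltr_norml; lra.
exists 1%N, 2%N, H', B'; split; last split => //.
  split; first exact: open_polytope_open.
  split; first exact: convex_polytope.
  by move=> s [x [Px _]]; case: (Pe x).
move=> sg; rewrite inE; apply/negP => /asboolP [x [Px _]].
exact: (Pe x).
Qed.

Lemma dotv_e (R : realType) K (k : 'I_K) (x : 'rV[R]_K) : dotv (\row_l (l == k)%:R) x = x 0 k.
Proof.
rewrite /dotv (bigD1 k) //= big1 ?addr0; first by rewrite mxE eqxx mul1r.
by move=> l /negbTE lk; rewrite mxE lk mul0r.
Qed.

Lemma dotv_1 (R : realType) K (x : 'rV[R]_K) : dotv (const_mx 1) x = \sum_k x 0 k.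
Proof. by apply: eq_bigr => k _; rewrite mxE mul1r. Qed.

Lemma construct (R : realType) d n (H : 'I_n -> hyp R d) (X : set 'rV[R]_d) :
  open X -> convex_set_rV X -> dim_cond H X -> (0 < #|hcode H X|)%N ->
  exists D m (H' : 'I_n -> hyp R D) (B' : 'I_m -> hyp R D),
    stable_pair H' (open_polytope B') /\ hcode H X = hcode H' (open_polytope B') /\
    generic_intersections (hcat H' B').
Proof.
move=> Xo Xc Xs Kpos.
pose C := hcode H X.
pose K := #|C|.
have hw0 : forall sg : {set 'I_n}, exists x, sg \in C -> X x /\
    forall i, (i \in sg -> 0 < hf (H i) x) /\ (i \notin sg -> hf (H i) x < 0).
  move=> sg; case: (boolP (sg \in C)) => sC; last by exists 0.
  by have [x hx] := atoms Xo Xs sC; exists x.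
have [wit hwit] := choice hw0.
pose p (k : 'I_K) := wit (enum_val k).
have hp : forall k : 'I_K, X (p k) /\ forall i, (i \in enum_val k -> 0 < hf (H i) (p k)) /\
    (i \notin enum_val k -> hf (H i) (p k) < 0).
  move=> k; exact: (hwit _ (enum_valP k)).
have hpz : forall i k, 0 < `|hf (H i) (p k)|.
  move=> i k; rewrite normr_gt0; have [_ /(_ i) [h1 h2]] := hp k.
  by case: (boolP (i \in enum_val k)) => ik; [rewrite gt_eqF ?h1 | rewrite lt_eqF ?h2].
have hsgn : forall (i : 'I_n) (k : 'I_K), (i \in enum_val k) = (0 < hf (H i) (p k)).
  move=> i k; have [_ /(_ i) [h1 h2]] := hp k.
  by case: (boolP (i \in enum_val k)) => ik; [rewrite h1 | rewrite ltNge ltW ?h2].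
have hr : forall k : 'I_K, exists2 e, 0 < e & forall e', 0 < e' -> e' <= e ->
    forall v : 'rV[R]_d, (forall j, `|v 0 j| < e') -> X (p k + v).
  move=> k; have [e e0 he] := open_ball Xo (proj1 (hp k)).
  exists e => // e' _ le v hv; apply: he => j; exact: lt_le_trans (hv j) le.
have [r r0 hrr] := fin_pos hr.
have [del del0 hdel] := robust Xc Xs r0 hrr.
have hb : forall ik : 'I_n * 'I_K, exists2 e, 0 < e & forall e', 0 < e' -> e' <= e ->
    e' <= `|hf (H ik.1) (p ik.2)|.
  by move=> [i k]; exists `|hf (H i) (p k)| => // e' _ le.
have [beta beta0 hbeta] := fin_pos hb.
pose T := \sum_i \sum_k `|hf (H i) (p k)|.
have T0 : 0 <= T by apply: sumr_ge0 => i _; apply: sumr_ge0.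
have Ti : forall i, \sum_k `|hf (H i) (p k)| <= T.
  by move=> i; rewrite /T (bigD1 i) //= lerDl; apply: sumr_ge0 => i0 _; apply: sumr_ge0.
pose nu := beta / (4 * (T + 1)).
have nu0 : 0 < nu by rewrite divr_gt0 // mulr_gt0 // ltr_pwDr.
have nuT : 2 * nu * T <= beta / 2.
  have T10 : T + 1 != 0 by rewrite gt_eqF // ltr_pwDr.
  have hnu : nu * T + nu = beta / 4 by rewrite /nu; field.
  rewrite -mulrA; lra.
pose eps := Num.min (Num.min (nu / 2) (beta / 4)) (Num.min (del / 4) (1 / 4)).
have eps0 : 0 < eps by rewrite /eps !lt_min (divr_gt0 nu0) ?(divr_gt0 beta0) ?(divr_gt0 del0) // divr_gt0.
have e1 : eps <= nu / 2 by rewrite /eps !ge_min lexx.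
have e2 : eps <= beta / 4 by rewrite /eps !ge_min lexx !orbT.
have e3 : eps <= del / 4 by rewrite /eps !ge_min lexx !orbT.
have e4 : eps <= 1 / 4 by rewrite /eps !ge_min lexx !orbT.
have k0 : 'I_K by exact: Ordinal Kpos.
pose g i : 'rV[R]_K := \row_k hf (H i) (p k).
pose b (j : 'I_K.+1) : 'rV[R]_K :=
  if unlift ord_max j is Some k then \row_l (l == k)%:R else const_mx 1.
have gn : forall i, g i != 0.
  move=> i; apply/negP => /eqP/rowP/(_ k0); rewrite !mxE => /eqP.
  by rewrite -normr_eq0 gt_eqF.
have bn : forall j, b j != 0.
  move=> j; rewrite /b; case: (unliftP ord_max j) => [k _|_].
    by apply/negP => /eqP/rowP/(_ k); rewrite !mxE eqxx => /eqP; rewrite oner_eq0.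
  by apply/negP => /eqP/rowP/(_ k0); rewrite !mxE => /eqP; rewrite oner_eq0.
pose c0 (k : 'I_(n + K.+1)) : R := match fintype.split k with
  | inl _ => 0 | inr j => if unlift ord_max j is Some _ then nu else 1 / 2 end.
have [H' [B' [hH [hB [gen dc]]]]] := assemble c0 gn bn eps0.
pose P := open_polytope B'.
have hHw : forall i, hw (H' i) = g i by move=> i; case: (hH i).
have hHh : forall i, `|hh (H' i)| < eps.
  by move=> i; case: (hH i) => _; rewrite /c0 split_lsh subr0.
have hBk : forall k, hw (B' (lift ord_max k)) = \row_l (l == k)%:R /\ `|hh (B' (lift ord_max k)) - nu| < eps.
  by move=> k; case: (hB (lift ord_max k)); rewrite /b /c0 split_rsh liftK.
have hBl : hw (B' ord_max) = const_mx 1 /\ `|hh (B' ord_max) - 1 / 2| < eps.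
  by case: (hB ord_max); rewrite /b /c0 split_rsh unlift_none.
have Pchar : forall x : 'rV[R]_K, P x <->
    (forall k, hh (B' (lift ord_max k)) < x 0 k) /\ hh (B' ord_max) < \sum_k x 0 k.
  move=> x; split.
    move=> Px; split.
      move=> k; have := Px (lift ord_max k); rewrite /hpos /= (proj1 (hBk k)) dotv_e.
      by rewrite subr_gt0.
    by have := Px ord_max; rewrite /hpos /= (proj1 hBl) dotv_1 subr_gt0.
  move=> [h1 h2] j; rewrite /hpos /=; case: (unliftP ord_max j) => [k ->|->].
    by rewrite (proj1 (hBk k)) dotv_e subr_gt0.
  by rewrite (proj1 hBl) dotv_1 subr_gt0.
exists K, K.+1, H', B'; split.
  split; first exact: open_polytope_open.
  split; first exact: convex_polytope.
  exact: dim_cond_mono dc.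
split => //.
apply/setP => sg; apply/idP/idP => hsg.
  pose k := enum_rank_in hsg sg.
  have ek : enum_val k = sg by rewrite /k enum_rankK_in.
  pose lam : 'rV[R]_K := \row_l ((l == k)%:R + 2 * nu).
  have Pl : P lam.
    apply/Pchar; split.
      move=> k'; have := proj2 (hBk k'); rewrite ltr_norml mxE => /andP [_ h].
      have : 0 <= ((k' == k)%:R : R) by case: (k' == k).
      lra.
    have := proj2 hBl; rewrite ltr_norml => /andP [_ h].
    under eq_bigr do rewrite mxE; rewrite big_split /= sumr_const card_ord.
    rewrite (bigD1 k) //= eqxx big1 ?addr0; last by move=> l /negbTE ->.
    have : 0 <= 2 * nu *+ K by rewrite mulrn_wge0 // mulr_ge0 // ltW.
    move=> hK; have h1 : (true%:R : R) = 1 by []. lra.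
  apply: (in_hcode Pl) => i; rewrite /hf (hHw i).
  have -> : dotv (g i) lam = hf (H i) (p k) + 2 * nu * \sum_l hf (H i) (p l).
    rewrite /dotv; under eq_bigr do rewrite !mxE mulrDr.
    rewrite big_split /= (bigD1 k) //= eqxx mulr1 big1 ?addr0; last first.
      by move=> l /negbTE ->; rewrite mulr0.
    by rewrite mulr_sumr; congr (_ + _); apply: eq_bigr => l _; rewrite mulrC.
  rewrite -addrA (sign_keep (e := beta)) -?ek ?hsgn //.
    by have := hbeta (i, k).
  apply: le_lt_trans (ler_normD _ _) _; rewrite normrN normrM.
  have hs : `|\sum_l hf (H i) (p l)| <= T by apply: le_trans (ler_norm_sum _ _ _) (Ti i).
  have : `|2 * nu| * `|\sum_l hf (H i) (p l)| <= beta / 2.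
    rewrite ger0_norm; last by rewrite mulr_ge0 // ltW.
    apply: le_trans _ nuT; apply: ler_wpM2l => //; by rewrite mulr_ge0 // ltW.
  have := hHh i; lra.
move: hsg; rewrite inE => /asboolP [lam [Pl [h1 h2]]].
have [hl1 hl2] := proj1 (Pchar lam) Pl.
pose S := \sum_k lam 0 k.
have S4 : 1 / 4 < S.
  by have := proj2 hBl; rewrite ltr_norml => /andP [h _]; rewrite /S; lra.
have S0 : 0 < S by apply: lt_trans S4; rewrite divr_gt0.
have lam0 : forall k, 0 <= lam 0 k.
  move=> k; have := proj2 (hBk k); rewrite ltr_norml => /andP [h _]; have := hl1 k; lra.
pose mu k := lam 0 k / S.
have mu0 : forall k, 0 <= mu k by move=> k; rewrite divr_ge0 // ltW.
have s1 : \sum_k mu k = 1 by rewrite -mulr_suml divff // gt_eqF.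
pose u i := - hh (H' i) / S.
have hu : forall i, `|u i| < del.
  move=> i; rewrite /u normrM normrN normrV ?unitfE ?gt_eqF // gtr0_norm //.
  rewrite ltr_pdivrMr //; apply: lt_le_trans (hHh i) _.
  apply: le_trans e3 _; rewrite ler_pdivrMr // -mulrA ler_pMr //; lra.
have E : sg = [set i | 0 < hf (H i) (\sum_k mu k *: p k) + u i]%SET; last first.
  by rewrite E; exact: hdel mu u mu0 s1 hu.
apply/setP => i; rewrite [RHS]inE.
have -> : hf (H i) (\sum_k mu k *: p k) + u i = hf (H' i) lam / S.
  rewrite hf_comb // [in RHS]/hf (hHw i) /u [in RHS]/dotv mulrBl -mulNr; congr (_ + _).
  rewrite mulr_suml; apply: eq_bigr => k _; rewrite mxE /mu; by rewrite [LHS]mulrC mulrA.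
rewrite pmulr_lgt0 ?invr_gt0 //.
case: (boolP (i \in sg)) => isg; first by rewrite (h1 i isg).
by apply/esym/negbTE/negP => /(h2 i isg).
Qed.

Lemma final_step (R : realType) (n : nat) (C : {set {set 'I_n}}) :
  stable_hyperplane_code R C ->
  exists (d m : nat) (H : 'I_n -> hyp R d) (B : 'I_m -> hyp R d),
    stable_pair H (open_polytope B) /\
    C = hcode H (open_polytope B) /\
    generic_intersections (hcat H B).
Proof.
move=> [d [H [X [[Xo [Xc Xs]] ->]]]].
case: (posnP #|hcode H X|) => [K0|Kpos]; last exact: construct.
have [D [m [H' [B' [sp [none gen]]]]]] := empty_case R n.
exists D, m, H', B'; split => //; split => //.
apply/setP => sg; rewrite (negbTE (none sg)); by rewrite (card0_eq K0).
Qed.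

End Helpers.

Local Open Scope classical_set_scope.

Theorem lemma7p3 (R : realType) (n : nat) (C : {set {set 'I_n}}) :
  stable_hyperplane_code R C ->
  exists (d m : nat) (H : 'I_n -> hyp R d) (B : 'I_m -> hyp R d),
    stable_pair H (open_polytope B) /\
    C = hcode H (open_polytope B) /\
    generic_intersections (hcat H B).
Proof. exact: Helpers.final_step. Qed.
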